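(* Let $s$ be a continuous proper scoring rule with convex exposure on an $n$-outcome forecast domain $\mathcal{D}$, with expected reward function $G$ and exposure function $\mathbf{g}$. Let $\mathbf{p}_1,\dots,\mathbf{p}_m\in\mathcal{D}$ and non-negative weights $w_1,\dots,w_m$ with $\sum_i w_i=1$. Then the function \[d(\mathbf{x}):=\sum_{i=1}^m w_i\,D_G(\mathbf{x}\parallel\mathbf{p}_i),\qquad \mathbf{x}\in\mathcal{D},\] is uniquely minimized at $\mathbf{x}=\mathbf{p}^*$, the quasi-arithmetic pool of $(\mathbf{p}_i,w_i)_{i=1}^m$ with respect to $\mathbf{g}$.
   Context: $\Delta^n$ is the standard simplex in $\mathbb{R}^n$ with vertices $\delta_1,\dots,\delta_n$. An $n$-outcome forecast domain is a convex $(n-1)$-dimensional subset of $\Delta^n$. A proper scoring rule on $\mathcal{D}$ is $s:\mathcal{D}\times[n]\to\mathbb{R}$ with $\sum_j p(j)s(\mathbf{p};j)\ge\sum_j p(j)s(\mathbf{x};j)$ for all $\mathbf{p},\mathbf{x}\in\mathcal{D}$, equality only if $\mathbf{x}=\mathbf{p}$. $G(\mathbf{p}):=\sum_j p(j)s(\mathbf{p};j)$ is differentiable and strictly convex for continuous $s$, and $\mathbf{g}=\nabla G$ (values taken modulo translation by $\mathbf{1}_n$). Convex exposure means the range of $\mathbf{g}$ is convex. The QA pool is the unique $\mathbf{p}^*\in\mathcal{D}$ with $\mathbf{g}(\mathbf{p}^* )=\sum_i w_i\mathbf{g}(\mathbf{p}_i)$ (modulo $\mathbf{1}_n$). The Bregman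 divergence is $D_G(\mathbf{p}\parallel\mathbf{q}):=G(\mathbf{p})-G(\mathbf{q})-\langle\mathbf{g}(\mathbf{q}),\mathbf{p}-\mathbf{q}\rangle$. *)

(* Defs.v *)
From HB Require Import structures.
From mathcomp Require Import all_boot all_order all_algebra.
From mathcomp Require Import reals.
Set Implicit Arguments. Unset Strict Implicit. Unset Printing Implicit Defensive.
Import Order.TTheory GRing.Theory Num.Theory.
Local Open Scope ring_scope.

Section Defs.
Variables (R : realType) (n : nat).

Definition vec := 'I_n -> R.

Definition dot (x y : vec) : R := \sum_(j < n) x j * y j.
Definition vsub (x y : vec) : vec := fun j => x j - y j.
Definition norm1 (x : vec) : R := \sum_(j < n) `|x j|.

Definition in_simplex (x : vec) : Prop :=
  (forall j, 0 <= x j) /\ \sum_(j < n) x j = 1.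

Definition convex_set (D : vec -> Prop) : Prop :=
  forall x y (t : R), D x -> D y -> 0 <= t <= 1 ->
    D (fun j => t * x j + (1 - t) * y j).

(* D is (n-1)-dimensional: D is nonempty and the linear span of the
   differences x - y (x, y in D), i.e. the direction space of the affine hull
   of D, is the whole hyperplane {v | sum_j v j = 0}. *)
Definition full_dim (D : vec -> Prop) : Prop :=
  (exists x, D x) /\
  forall v : vec, \sum_(j < n) v j = 0 ->
    exists (k : nat) (c : 'I_k -> R) (a b : 'I_k -> vec),
      (forall i, D (a i) /\ D (b i)) /\
      forall j, v j = \sum_(i < k) c i * (a i j - b i j).

Definition forecast_domain (D : vec -> Prop) : Prop :=
  (forall x, D x -> in_simplex x) /\ convex_set D /\ full_dim D.

(* s p j = s(p; j).  Proper scoring rule on D (strictly proper). *)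
Definition proper_scoring_rule (D : vec -> Prop) (s : vec -> vec) : Prop :=
  forall p x, D p -> D x ->
    dot p (s x) <= dot p (s p) /\ (dot p (s x) = dot p (s p) -> x = p).

Definition continuous_on_dom (D : vec -> Prop) (s : vec -> vec) : Prop :=
  forall p, D p -> forall j (e : R), 0 < e ->
    exists d : R, 0 < d /\
      forall x, D x -> norm1 (vsub x p) < d -> `|s x j - s p j| < e.

Definition expected_reward (s : vec -> vec) (p : vec) : R := dot p (s p).

(* Since D spans the hyperplane sum = 0, g(p) is thereby
   determined exactly modulo translation by the all-ones vector. *)
Definition is_gradient_on (D : vec -> Prop) (G : vec -> R) (g : vec -> vec) : Prop :=
  forall p, D p -> forall e : R, 0 < e ->
    exists d : R, 0 < d /\
      forall x, D x -> norm1 (vsub x p) < d ->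
        `|G x - G p - dot (g p) (vsub x p)| <= e * norm1 (vsub x p).

Definition eqmod1 (u v : vec) : Prop := exists c : R, forall j, u j = v j + c.

Definition convex_exposure (D : vec -> Prop) (g : vec -> vec) : Prop :=
  forall p q (t : R), D p -> D q -> 0 <= t <= 1 ->
    exists r, D r /\ eqmod1 (g r) (fun j => t * g p j + (1 - t) * g q j).

Definition is_QA_pool (D : vec -> Prop) (g : vec -> vec) (m : nat)
  (P : 'I_m -> vec) (w : 'I_m -> R) (pstar : vec) : Prop :=
  D pstar /\ eqmod1 (g pstar) (fun j => \sum_(i < m) w i * g (P i) j).

Definition bregman (G : vec -> R) (g : vec -> vec) (p q : vec) : R :=
  G p - G q - dot (g q) (vsub p q).

Definition wdiv (G : vec -> R) (g : vec -> vec) (m : nat)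
  (P : 'I_m -> vec) (w : 'I_m -> R) (x : vec) : R :=
  \sum_(i < m) w i * bregman G g x (P i).

End Defs.

(* Main.v *)
Require Import Defs.
From HB Require Import structures.
From mathcomp Require Import all_boot all_order all_algebra.
From mathcomp Require Import reals.
From mathcomp Require Import lra ring.
From Stdlib Require Import ClassicalEpsilon.
Import Order.TTheory GRing.Theory Num.Theory.
Local Open Scope ring_scope.

Lemma dot_vsub (R : realType) n (u a b : vec R n) : dot u (vsub a b) = dot u a - dot u b.
Proof. by rewrite /dot /vsub -sumrB; apply: eq_bigr => j _; rewrite mulrBr. Qed.

Lemma dotC (R : realType) n (u v : vec R n) : dot u v = dot v u.
Proof. by rewrite /dot; apply: eq_bigr => j _; rewrite mulrC. Qed.

Lemma dot_scale (R : realType) n (u v v' : vec R n) t :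
  (forall j, v j = t * v' j) -> dot u v = t * dot u v'.
Proof. by move=> H; rewrite /dot mulr_sumr; apply: eq_bigr => j _; rewrite H mulrCA. Qed.

Lemma fin_delta (R : realType) k (Q : 'I_k -> R -> Prop) :
  (forall j d d', 0 < d' <= d -> Q j d -> Q j d') ->
  (forall j, exists d, 0 < d /\ Q j d) -> exists d, 0 < d /\ forall j, Q j d.
Proof.
move=> mono H.
pose dj j := proj1_sig (constructive_indefinite_description _ (H j)).
have djP j : 0 < dj j /\ Q j (dj j) by rewrite /dj; case: constructive_indefinite_description.
have S0 : 0 <= \sum_j (dj j)^-1 by apply: sumr_ge0 => j _; rewrite invr_ge0 ltW //; case: (djP j).
exists (1 + \sum_j (dj j)^-1)^-1; split; first by rewrite invr_gt0; lra.
move=> j; case: (djP j) => dp Qj; apply: (mono j (dj j)) => //.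
rewrite invr_gt0 ltr_wpDr //=.
rewrite -[X in _ <= X]invrK ler_pV2; last 2 first.
- have hp : 0 < 1 + \sum_j (dj j)^-1 by lra.
  by apply/andP; split; [apply: unitf_gt0 |]; exact: hp.
- have hp : 0 < (dj j)^-1 by rewrite invr_gt0.
  by rewrite inE; apply/andP; split; [apply: unitf_gt0 |]; exact: hp.
rewrite (bigD1 j) //=.
have : 0 <= \sum_(i < k | i != j) (dj i)^-1 by apply: sumr_ge0 => i _; rewrite invr_ge0 ltW //; case: (djP i).
lra.
Qed.

Lemma le0_of_small (R : realType) (a K : R) : 0 <= K ->
  (forall e : R, 0 < e -> a <= e * K) -> a <= 0.
Proof.
move=> K0 H; rewrite leNgt; apply/negP => a0.
have e0 : 0 < a / (K + 1) by rewrite divr_gt0 //; lra.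
have := H _ e0.
have -> : a / (K + 1) * K = a - a / (K + 1).
  by field; rewrite gt_eqF //; lra.
lra.
Qed.

Lemma key (R : realType) n (D : vec R n -> Prop) s g p y :
  forecast_domain D -> proper_scoring_rule D s -> continuous_on_dom D s ->
  is_gradient_on D (expected_reward s) g -> D p -> D y ->
  dot (g p) (vsub y p) <= dot (s p) (vsub y p).
Proof.
move=> [_ [Dconv _]] Hprop Hcont Hgrad Dp Dy.
rewrite -subr_le0.
set a := _ - _.
set N := norm1 (vsub y p).
have N0 : 0 <= N by apply: sumr_ge0 => j _.
apply: (@le0_of_small _ a (2 * N)); first lra.
move=> e e0.
have [d1 [d1p Hd1]] := Hgrad p Dp e e0.
have [d2 [d2p Hd2]] : exists d, 0 < d /\ forall j x, D x -> norm1 (vsub x p) < d ->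
    `|s x j - s p j| < e.
  have := @fin_delta R n (fun j d => forall x, D x -> norm1 (vsub x p) < d -> `|s x j - s p j| < e).
  apply.
  - move=> j d d' /andP[_ le] Hd x Dx lt; apply: Hd => //; exact: lt_le_trans lt le.
  - by move=> j; exact: Hcont.
pose d := Num.min d1 d2.
have dp : 0 < d by rewrite lt_min d1p d2p.
pose t := Num.min 1 (d / (N + 1)).
have N1 : 0 < N + 1 by lra.
have tp : 0 < t by rewrite lt_min ltr01 /= divr_gt0.
have t1 : t <= 1 by rewrite ge_min lexx.
have tN : t * N < d.
  have : t <= d / (N + 1) by rewrite ge_min lexx orbT.
  move=> h; apply: (le_lt_trans (y := d / (N + 1) * N)); first by rewrite ler_wpM2r.
  have -> : d / (N + 1) * N = d - d / (N + 1) by field; rewrite gt_eqF.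
  have : 0 < d / (N + 1) by rewrite divr_gt0.
  lra.
pose x := fun j => t * y j + (1 - t) * p j.
have Dx : D x by apply: Dconv => //; rewrite (ltW tp) t1.
have hv : forall j, vsub x p j = t * vsub y p j by move=> j; rewrite /vsub /x; ring.
have nx : norm1 (vsub x p) = t * N.
  rewrite /N /norm1 mulr_sumr; apply: eq_bigr => j _.
  by rewrite hv normrM (ger0_norm (ltW tp)).
have nxd1 : norm1 (vsub x p) < d1.
  by rewrite nx; apply: lt_le_trans tN _; rewrite ge_min lexx.
have nxd2 : norm1 (vsub x p) < d2.
  by rewrite nx; apply: lt_le_trans tN _; rewrite ge_min lexx orbT.
have H1 := Hd1 x Dx nxd1.
have [Hpp _] := Hprop p x Dp Dx.
have H3 : \sum_j vsub x p j * (s x j - s p j) <= e * norm1 (vsub x p).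
  rewrite /norm1 mulr_sumr; apply: ler_sum => j _.
  apply: le_trans (ler_norm _) _; rewrite normrM mulrC.
  by apply: ler_wpM2r; [exact: normr_ge0 | exact: ltW (Hd2 j x Dx nxd2)].
have H4 : \sum_j vsub x p j * (s x j - s p j) =
    dot x (s x) - dot x (s p) - (dot p (s x) - dot p (s p)).
  change (dot (vsub x p) (vsub (s x) (s p)) = 
    dot x (s x) - dot x (s p) - (dot p (s x) - dot p (s p))).
  rewrite dot_vsub dotC dot_vsub [dot (vsub x p) (s p)]dotC dot_vsub.
  rewrite ![dot (s x) _]dotC ![dot (s p) _]dotC; ring.
have ta : t * a = dot (g p) (vsub x p) - dot (s p) (vsub x p).
  by rewrite /a mulrBr -(@dot_scale _ _ (g p) _ _ _ hv) -(@dot_scale _ _ (s p) _ _ _ hv).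
have E : dot (s p) (vsub x p) = dot x (s p) - dot p (s p).
  by rewrite dot_vsub ![dot (s p) _]dotC.
move: H1; rewrite nx -/(expected_reward s x) => /ler_normlP [H1a H1b].
rewrite /expected_reward in H1a H1b.
rewrite nx in H3.
have : t * a <= t * (e * (2 * N)).
  have -> : t * (e * (2 * N)) = 2 * (e * (t * N)) by ring.
  rewrite ta E.
  lra.
by rewrite ler_pM2l.
Qed.

Lemma exist_pool (R : realType) n (D : vec R n -> Prop) g m :
  convex_exposure D g ->
  forall (P : 'I_m -> vec R n) (w : 'I_m -> R),
  (forall i, D (P i)) -> (forall i, 0 <= w i) -> \sum_(i < m) w i = 1 ->
  exists r, D r /\ eqmod1 (g r) (fun j => \sum_(i < m) w i * g (P i) j).
Proof.
move=> Hce; elim: m => [|m IH] P w DP w0 w1.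
  by move: w1; rewrite big_ord0 => /eqP; rewrite eq_sym oner_eq0.
move: w1; rewrite big_ord_recr /= => w1.
set wl := w ord_max in w1 *.
have wl0 : 0 <= wl := w0 _.
have S0 : 0 <= \sum_(i < m) w (widen_ord (leqnSn m) i) by apply: sumr_ge0 => i _.
have [wl1|wl1] := eqVneq wl 1.
  have Z : forall i : 'I_m, w (widen_ord (leqnSn m) i) = 0.
    move=> i; apply: (psumr_eq0P (P := predT) (F := fun i : 'I_m => w (widen_ord (leqnSn m) i))) => //.
    lra.
  exists (P ord_max); split => //; exists 0 => j.
  rewrite big_ord_recr /= big1 ?add0r; last by move=> i _; rewrite Z mul0r.
  by rewrite -/wl wl1 mul1r addr0.
have u0 : 0 < 1 - wl by rewrite lt_neqAle subr_ge0 eq_sym subr_eq0 eq_sym wl1 /=; lra.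
pose w' := fun i : 'I_m => w (widen_ord (leqnSn m) i) / (1 - wl).
have [r' [Dr' [c' Hc']]] : exists r, D r /\ eqmod1 (g r) (fun j => \sum_(i < m) w' i * g (P (widen_ord (leqnSn m) i)) j).
  apply: IH => //.
  - by move=> i; rewrite /w' divr_ge0 // ltW.
  - rewrite /w' -mulr_suml.
    have -> : \sum_(i < m) w (widen_ord (leqnSn m) i) = 1 - wl by lra.
    by rewrite divff // gt_eqF.
have [r [Dr [c Hc]]] := Hce r' (P ord_max) (1 - wl) Dr' (DP _) (ltac:(apply/andP; split; lra)).
exists r; split => //; exists ((1 - wl) * c' + c) => j.
rewrite Hc Hc' big_ord_recr /= -/wl.
rewrite mulrDr mulr_sumr.
have -> : \sum_(i < m) (1 - wl) * (w' i * g (P (widen_ord (leqnSn m) i)) j) =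
   \sum_(i < m) w (widen_ord (leqnSn m) i) * g (P (widen_ord (leqnSn m) i)) j.
  apply: eq_bigr => i _; rewrite /w'; field; rewrite gt_eqF //.
ring.
Qed.

Theorem proposition4p3 (R : realType) (n m : nat)
  (D : vec R n -> Prop) (s : vec R n -> vec R n) (g : vec R n -> vec R n)
  (P : 'I_m -> vec R n) (w : 'I_m -> R) :
  forecast_domain D ->
  proper_scoring_rule D s ->
  continuous_on_dom D s ->
  is_gradient_on D (expected_reward s) g ->
  convex_exposure D g ->
  (forall i, D (P i)) ->
  (forall i, 0 <= w i) ->
  \sum_(i < m) w i = 1 ->
  (exists pstar, is_QA_pool D g P w pstar) /\
  (forall pstar, is_QA_pool D g P w pstar ->
     forall x, D x -> x <> pstar ->
       wdiv (expected_reward s) g P w pstar < wdiv (expected_reward s) g P w x).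
Proof.
move=> FD Hprop Hcont Hgrad Hce DP w0 w1; split.
  exact: exist_pool.
move=> ps [Dps [c Hc]] x Dx neq.
have [Hsim _] := FD.
have [_ sx] := Hsim x Dx.
have [_ sps] := Hsim ps Dps.
have sv : \sum_j vsub x ps j = 0 by rewrite /vsub sumrB sx sps subrr.
have E : dot (g ps) (vsub x ps) = \sum_i w i * dot (g (P i)) (vsub x ps).
  rewrite /dot.
  transitivity (\sum_j ((\sum_i w i * g (P i) j) * vsub x ps j) + c * \sum_j vsub x ps j).
    rewrite mulr_sumr -big_split /=; apply: eq_bigr => j _; rewrite Hc; ring.
  rewrite sv mulr0 addr0.
  under eq_bigr do rewrite mulr_suml.
  rewrite exchange_big /=; apply: eq_bigr => i _; rewrite mulr_sumr.
  by apply: eq_bigr => j _; ring.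
have diff : wdiv (expected_reward s) g P w x - wdiv (expected_reward s) g P w ps
    = expected_reward s x - expected_reward s ps - dot (g ps) (vsub x ps).
  rewrite /wdiv -sumrB.
  have H i : w i * bregman (expected_reward s) g x (P i) - w i * bregman (expected_reward s) g ps (P i)
     = w i * (expected_reward s x - expected_reward s ps) - w i * dot (g (P i)) (vsub x ps).
    rewrite /bregman !dot_vsub; ring.
  rewrite (eq_bigr _ (fun i _ => H i)) sumrB -mulr_suml w1 mul1r E //.
have K := @key _ _ _ _ _ _ _ FD Hprop Hcont Hgrad Dps Dx.
have E2 : dot (s ps) (vsub x ps) = dot x (s ps) - dot ps (s ps).
  by rewrite dot_vsub ![dot (s ps) _]dotC.
have [Hle Heq] := Hprop x ps Dx Dps.
have Hlt : dot x (s ps) < dot x (s x).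
  rewrite lt_neqAle Hle andbT; apply/eqP => h; exact: neq (esym (Heq h)).
rewrite -subr_gt0 diff /expected_reward.
lra.
Qed.
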